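(* Let $X$ be a proper geodesic $\mathrm{CAT}(-1)$ metric space and $\epsilon>0$, and let $$c_0(\epsilon)=2\log\left(\frac{2(1+e^{\epsilon/2})\sinh\epsilon}{\epsilon}\right).$$ For all points $a,b,a',b'\in X$ such that $d(a,a')\le\epsilon$, $d(b,b')\le\epsilon$ and $d(a,b)\ge c_0(\epsilon)$, if $m$ is the midpoint of the geodesic segment $[a,b]$, then $d(m,[a',b'])\le\epsilon/2$. *)

(* Defs.v *)
From HB Require Import structures.
From mathcomp Require Import all_boot all_order all_algebra.
From mathcomp Require Import all_classical all_reals all_analysis.
Set Implicit Arguments. Unset Strict Implicit. Unset Printing Implicit Defensive.
Import Order.TTheory GRing.Theory Num.Theory.
Local Open Scope classical_set_scope.
Local Open Scope ring_scope.

Section Defs.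
Variable R : realType.

Definition sinhR (x : R) : R := (expR x - expR (- x)) / 2.
Definition acoshR (y : R) : R := ln (y + Num.sqrt (y ^+ 2 - 1)).

Definition is_geodesic {T : Type} (d : T -> T -> R) (x y : T) (g : R -> T) : Prop :=
  g 0 = x /\ g (d x y) = y /\
  forall s t, 0 <= s <= d x y -> 0 <= t <= d x y -> d (g s) (g t) = `|s - t|.

Definition geodesic_space (X : metricType R) : Prop :=
  forall x y : X, exists g : R -> X, is_geodesic (@mdist R X) x y g.

Definition proper_space (X : metricType R) : Prop :=
  forall (x : X) (r : R), compact (closed_ball x r).

(* The hyperbolic plane H^2 (curvature -1), hyperboloid model in R^3 *)
Definition hpoint : Type := (R * R * R)%type.
Definition in_H2 (p : hpoint) : Prop :=
  p.1.1 ^+ 2 - p.1.2 ^+ 2 - p.2 ^+ 2 = 1 /\ 0 < p.1.1.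
Definition hdist (p q : hpoint) : R :=
  acoshR (p.1.1 * q.1.1 - p.1.2 * q.1.2 - p.2 * q.2).
Definition H2_geodesic (p q : hpoint) (g : R -> hpoint) : Prop :=
  is_geodesic hdist p q g /\ forall s, 0 <= s <= hdist p q -> in_H2 (g s).

Definition CAT_m1 (X : metricType R) : Prop :=
  forall (p q r : X) (gpq gqr grp : R -> X) (P Q S : hpoint)
         (gPQ gQS gSP : R -> hpoint),
    is_geodesic (@mdist R X) p q gpq ->
    is_geodesic (@mdist R X) q r gqr ->
    is_geodesic (@mdist R X) r p grp ->
    in_H2 P -> in_H2 Q -> in_H2 S ->
    hdist P Q = mdist p q -> hdist Q S = mdist q r -> hdist S P = mdist r p ->
    H2_geodesic P Q gPQ -> H2_geodesic Q S gQS -> H2_geodesic S P gSP ->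
    let side (i : nat) : (R -> X) * (R -> hpoint) * R :=
      match i with
      | 0%N => (gpq, gPQ, mdist p q)
      | 1%N => (gqr, gQS, mdist q r)
      | _ => (grp, gSP, mdist r p)
      end in
    forall (i j : 'I_3) (s t : R),
      0 <= s <= (side i).2 -> 0 <= t <= (side j).2 ->
      mdist ((side i).1.1 s) ((side j).1.1 t)
        <= hdist ((side i).1.2 s) ((side j).1.2 t).

Definition dist_to_seg (X : metricType R) (m : X) (g : R -> X) (L : R) : R :=
  inf [set mdist m (g t) | t in [set t : R | 0 <= t <= L]].

Definition c0 (eps : R) : R :=
  2 * ln ((2 * (1 + expR (eps / 2)) * sinhR eps) / eps).

End Defs.

(* Main.v *)
Require Import Defs.
From HB Require Import structures.
From mathcomp Require Import all_boot all_order all_algebra.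
From mathcomp Require Import all_classical all_reals all_analysis.
From mathcomp Require Import ring lra.
Import Order.TTheory GRing.Theory Num.Theory.
Local Open Scope classical_set_scope.
Local Open Scope ring_scope.

Section Hyp.
Variable R : realType.
Implicit Types x y s t : R.

Definition coshR x : R := (expR x + expR (- x)) / 2.

Lemma expR_neq0 x : expR x != 0.
Proof. by rewrite gt_eqF ?expR_gt0. Qed.

Lemma sh0 : sinhR (0:R) = 0.
Proof. by rewrite /sinhR oppr0 subrr mul0r. Qed.
Lemma ch0 : coshR 0 = 1.
Proof. rewrite /coshR oppr0 expR0; lra. Qed.

Lemma ch_sh x : coshR x ^+ 2 - sinhR x ^+ 2 = 1.
Proof. rewrite /coshR /sinhR expRN; have := expR_neq0 x; move=> h; by field. Qed.

Lemma ch_sub x y : coshR (x - y) = coshR x * coshR y - sinhR x * sinhR y.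
Proof.
rewrite /coshR /sinhR opprB !expRD !expRN.
have := expR_neq0 x; have := expR_neq0 y => h1 h2; field; exact/andP.
Qed.

Lemma sh_ge0 x : 0 <= x -> 0 <= sinhR x.
Proof.
move=> hx; rewrite /sinhR divr_ge0 // subr_ge0 ler_expR; lra.
Qed.
Lemma sh_gt0 x : 0 < x -> 0 < sinhR x.
Proof.
move=> hx; rewrite /sinhR divr_gt0 // subr_gt0 ltr_expR; lra.
Qed.
Lemma ch_gt0 x : 0 < coshR x.
Proof. by rewrite /coshR divr_gt0 // addr_gt0 // expR_gt0. Qed.

Lemma chN x : coshR (- x) = coshR x.
Proof. by rewrite /coshR opprK addrC. Qed.

Lemma ch_mono x y : 0 <= x -> x <= y -> coshR x <= coshR y.
Proof.
move=> hx hxy; rewrite /coshR !expRN ler_pM2r //.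
have hX : 1 <= expR x by rewrite -expR0 ler_expR.
have hXY : expR x <= expR y by rewrite ler_expR.
set X := expR x in hX hXY *; set Y := expR y in hXY *.
have hY : 0 < Y by lra.
have hX0 : 0 < X by lra.
rewrite -subr_ge0.
have -> : Y + Y^-1 - (X + X^-1) = (Y - X) * (X * Y - 1) / (X * Y).
  by field; apply/andP; split; rewrite gt_eqF.
apply: divr_ge0; last by nra.
apply: mulr_ge0; nra.
Qed.

Lemma ch_abs x : coshR `|x| = coshR x.
Proof. by case: (ler0P x) => h; rewrite ?chN. Qed.

Lemma ch_le x y : `|x| <= `|y| -> coshR x <= coshR y.
Proof. by move=> h; rewrite -ch_abs -(ch_abs y) ch_mono. Qed.

Lemma acosh_ch x : acoshR (coshR x) = `|x|.
Proof.
rewrite /acoshR.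
have -> : coshR x ^+ 2 - 1 = sinhR x ^+ 2 by have := ch_sh x; lra.
rewrite sqrtr_sqr.
case: (ler0P x) => hx.
- have : sinhR x <= 0 by have := sh_ge0 (- x); rewrite /sinhR opprK; lra.
  move=> hs; rewrite ler0_norm //.
  have -> : coshR x + - sinhR x = expR (- x) by rewrite /coshR /sinhR; field.
  by rewrite expRK.
- rewrite ger0_norm ?sh_ge0 ?ltW //.
  have -> : coshR x + sinhR x = expR x by rewrite /coshR /sinhR; field.
  by rewrite expRK.
Qed.

Lemma sh_ratio s l : s <= l -> sinhR s <= expR (s - l) * sinhR l.
Proof.
move=> h; rewrite /sinhR mulrA ler_pM2r // mulrBr -!expRD.
rewrite lerB //; first by rewrite addrNK.
rewrite ler_expR; lra.
Qed.

Lemma acosh_le (C d : R) : 1 <= C -> C + Num.sqrt (C ^+ 2 - 1) <= expR d -> acoshR C <= d.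
Proof.
move=> h1 h2; rewrite /acoshR -(expRK d) ler_ln // posrE ?expR_gt0 //.
have := sqrtr_ge0 (C ^+ 2 - 1); lra.
Qed.


Definition mdot (p q : hpoint R) : R := p.1.1 * q.1.1 - p.1.2 * q.1.2 - p.2 * q.2.
Definition ray (k c t : R) : hpoint R := (coshR t, k * sinhR t, c * sinhR t).
Definition hlin (a : R) (P : hpoint R) (b : R) (Q : hpoint R) : hpoint R :=
  (a * P.1.1 + b * Q.1.1, a * P.1.2 + b * Q.1.2, a * P.2 + b * Q.2).
Definition seg (P Q : hpoint R) (D : R) (s : R) : hpoint R :=
  if D == 0 then P else hlin (sinhR (D - s) / sinhR D) P (sinhR s / sinhR D) Q.

Lemma hdistE p q : hdist p q = acoshR (mdot p q).
Proof. by []. Qed.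

Lemma in_H2E p : in_H2 p <-> mdot p p = 1 /\ 0 < p.1.1.
Proof. by rewrite /in_H2 /mdot !expr2. Qed.

Lemma mdot_ray k c k' c' s t :
  mdot (ray k c s) (ray k' c' t) =
  coshR s * coshR t - (k * k' + c * c') * sinhR s * sinhR t.
Proof. rewrite /mdot /ray /=; ring. Qed.

Lemma mdot_ray_same k c s t : k ^+ 2 + c ^+ 2 = 1 ->
  mdot (ray k c s) (ray k c t) = coshR (s - t).
Proof.
move=> h; rewrite mdot_ray ch_sub -!expr2 h mul1r; ring.
Qed.

Lemma in_H2_ray k c t : k ^+ 2 + c ^+ 2 = 1 -> in_H2 (ray k c t).
Proof.
move=> h; apply/in_H2E; split; last by rewrite /ray /= ch_gt0.
by rewrite mdot_ray_same // subrr ch0.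
Qed.

Lemma hdist_ray k c s t : k ^+ 2 + c ^+ 2 = 1 ->
  hdist (ray k c s) (ray k c t) = `|s - t|.
Proof. by move=> h; rewrite hdistE mdot_ray_same // acosh_ch. Qed.

Lemma ray_geod k c l : k ^+ 2 + c ^+ 2 = 1 -> 0 <= l ->
  H2_geodesic (ray k c 0) (ray k c l) (ray k c).
Proof.
move=> h hl; have E : hdist (ray k c 0) (ray k c l) = l.
  by rewrite hdist_ray // sub0r normrN ger0_norm.
split; last by move=> s _; apply: in_H2_ray.
by rewrite /is_geodesic E; split=> //; split=> // s t _ _; rewrite hdist_ray.
Qed.

Lemma ray_geod_rev k c l : k ^+ 2 + c ^+ 2 = 1 -> 0 <= l ->
  H2_geodesic (ray k c l) (ray k c 0) (fun s => ray k c (l - s)).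
Proof.
move=> h hl; have E : hdist (ray k c l) (ray k c 0) = l.
  by rewrite hdist_ray // subr0 ger0_norm.
split; last by move=> s _; apply: in_H2_ray.
rewrite /is_geodesic E subr0 subrr; split=> //; split=> // s t _ _.
rewrite hdist_ray // distrC; congr (`|_|); ring.
Qed.

Lemma mdot_hlin a P b Q c d :
  mdot (hlin a P b Q) (hlin c P d Q) =
  a * c * mdot P P + (a * d + b * c) * mdot P Q + b * d * mdot Q Q.
Proof. rewrite /mdot /hlin /=; ring. Qed.

Lemma mdotC P Q : mdot P Q = mdot Q P.
Proof. rewrite /mdot; ring. Qed.

Lemma mdot_eq1 P Q : in_H2 P -> in_H2 Q -> mdot P Q = 1 -> P = Q.
Proof.
case: P => [[x1 y1] z1]; case: Q => [[x2 y2] z2].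
rewrite /in_H2 /mdot /= => -[h1 p1] [h2 p2] h.
have e : (y1 - y2) ^+ 2 + (z1 - z2) ^+ 2 + (y1 * z2 - z1 * y2) ^+ 2 = 0.
  have -> : (y1 - y2) ^+ 2 + (z1 - z2) ^+ 2 + (y1 * z2 - z1 * y2) ^+ 2 =
    (x1 ^+ 2) * (x2 ^+ 2) - (x1 * x2) ^+ 2 +
    (1 + y1 ^+ 2 + z1 ^+ 2 - x1 ^+ 2) * (x2 ^+ 2)
    + (1 + y1 ^+ 2 + z1 ^+ 2) * (1 + y2 ^+ 2 + z2 ^+ 2 - x2 ^+ 2)
    + (x1 * x2 - y1 * y2 - z1 * z2 - 1) * (x1 * x2 + 1 + y1 * y2 + z1 * z2).
    ring.
  rewrite h; have -> : 1 + y1 ^+ 2 + z1 ^+ 2 - x1 ^+ 2 = 0 by lra.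
  have -> : 1 + y2 ^+ 2 + z2 ^+ 2 - x2 ^+ 2 = 0 by lra.
  ring.
have s1 := sqr_ge0 (y1 - y2); have s2 := sqr_ge0 (z1 - z2).
have s3 := sqr_ge0 (y1 * z2 - z1 * y2).
have ey : y1 = y2.
  by apply/eqP; rewrite -subr_eq0 -sqrf_eq0; apply/eqP; lra.
have ez : z1 = z2.
  by apply/eqP; rewrite -subr_eq0 -sqrf_eq0; apply/eqP; lra.
subst y2 z2.
have ex : x1 = x2.
  have : x1 ^+ 2 = x2 ^+ 2 by lra.
  by move/eqP; rewrite eqf_sqr => /orP[/eqP//|/eqP e2]; lra.
by subst.
Qed.


Lemma seg_identity (D s t : R) : 0 < D ->
  let a u := sinhR (D - u) / sinhR D in let b u := sinhR u / sinhR D in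
  a s * a t + (a s * b t + b s * a t) * coshR D + b s * b t = coshR (s - t).
Proof.
move=> hD a b; rewrite /a /b.
have hs := sh_gt0 D hD.
have hE : expR D - (expR D)^-1 != 0.
  by move: hs; rewrite /sinhR expRN => h; apply/eqP => e; move: h; rewrite e mul0r ltxx.
rewrite /sinhR /coshR !opprB !expRD !expRN.
have := expR_neq0 D; have := expR_neq0 s; have := expR_neq0 t => h1 h2 h3.
have hE2 : expR D * expR D - 1 != 0.
  have -> : expR D * expR D - 1 = expR D * (expR D - (expR D)^-1) by field.
  by rewrite mulf_neq0.
field.
by rewrite h1 h2 h3 hE2.
Qed.


Lemma mdot_seg P Q D s t : in_H2 P -> in_H2 Q -> 0 < D -> mdot P Q = coshR D ->
  mdot (seg P Q D s) (seg P Q D t) = coshR (s - t).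
Proof.
move=> hP hQ hD hPQ; rewrite /seg (gt_eqF hD) mdot_hlin.
rewrite (proj1 ((in_H2E _).1 hP)) (proj1 ((in_H2E _).1 hQ)) hPQ !mulr1.
exact: seg_identity.
Qed.

Lemma seg_geod P Q D : in_H2 P -> in_H2 Q -> 0 <= D -> mdot P Q = coshR D ->
  H2_geodesic P Q (seg P Q D).
Proof.
move=> hP hQ hD0 hPQ.
have E : hdist P Q = D by rewrite hdistE hPQ acosh_ch ger0_norm.
case: (eqVneq D 0) => [D0|Dn0].
- rewrite D0 ch0 in hPQ E *; have PQ := @mdot_eq1 P Q hP hQ hPQ; subst Q.
  rewrite /seg eqxx; split; last by [].
  rewrite /is_geodesic E; split=> //; split=> // s t /andP[hs1 hs2] /andP[ht1 ht2].
  have -> : s = 0 by lra.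
  have -> : t = 0 by lra.
  by rewrite subrr normr0.
have hD : 0 < D by rewrite lt_neqAle eq_sym Dn0 hD0.
have shD := sh_gt0 D hD.
have shDn : sinhR D != 0 by rewrite gt_eqF.
split.
  rewrite /is_geodesic E; split; [|split].
  - rewrite /seg (negbTE Dn0) subr0 sh0 mul0r divff //.
    by case: P {hP hPQ E} => [[x y] z]; rewrite /hlin /= !mul1r !mul0r !addr0.
  - rewrite /seg (negbTE Dn0) subrr sh0 mul0r divff //.
    by case: Q {hQ hPQ E} => [[x y] z]; rewrite /hlin /= !mul1r !mul0r !add0r.
  - by move=> s t _ _; rewrite hdistE mdot_seg // acosh_ch.
move=> s /andP[hs1 hs2]; apply/in_H2E; split.
  by rewrite mdot_seg // subrr ch0.
rewrite /seg (negbTE Dn0) /hlin /=.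
have p1 := proj2 ((in_H2E _).1 hP); have q1 := proj2 ((in_H2E _).1 hQ).
rewrite E in hs2.
have a0 : 0 <= sinhR (D - s) / sinhR D.
  by apply: divr_ge0; [apply: sh_ge0; lra | exact: ltW].
have b0 : 0 <= sinhR s / sinhR D.
  by apply: divr_ge0; [apply: sh_ge0; lra | exact: ltW].
case: (eqVneq s 0) => [->|sn0].
  rewrite subr0 sh0 mul0r divff // mul1r mul0r addr0; exact: p1.
have sp : 0 < s by rewrite lt_neqAle eq_sym sn0 hs1.
have b1 : 0 < sinhR s / sinhR D by apply: divr_gt0 => //; apply: sh_gt0.
have := mulr_ge0 a0 (ltW p1); have := mulr_gt0 b1 q1; lra.
Qed.


Lemma shN x : sinhR (- x) = - sinhR x.
Proof. rewrite /sinhR opprK; lra. Qed.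

Lemma ch_add x y : coshR (x + y) = coshR x * coshR y + sinhR x * sinhR y.
Proof. by rewrite -(opprK y) ch_sub chN shN opprK mulrN opprK. Qed.

Lemma ray0 k c : ray k c 0 = ray 1 0 0.
Proof. by rewrite /ray sh0 !mulr0. Qed.

Lemma geod_rev (X : metricType R) (x y : X) g :
  is_geodesic (@mdist R X) x y g ->
  is_geodesic (@mdist R X) y x (fun s => g (mdist x y - s)).
Proof.
move=> [g0 [g1 gd]]; split; first by rewrite subr0.
split; first by rewrite metric_sym subrr.
move=> s t /andP[s1 s2] /andP[t1 t2]; rewrite metric_sym in s2 t2.
rewrite gd; last (apply/andP; split; lra); last (apply/andP; split; lra).
by rewrite distrC; congr (`|_|); ring.
Qed.

Lemma cat_vertex (X : metricType R) (Hgeo : geodesic_space X) (Hcat : CAT_m1 X)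
  (V A B : X) gA gB :
  is_geodesic (@mdist R X) V A gA -> is_geodesic (@mdist R X) V B gB ->
  0 < mdist V A -> 0 < mdist V B ->
  exists k, [/\ k <= 1,
    k * sinhR (mdist V A) * sinhR (mdist V B) =
      coshR (mdist V A) * coshR (mdist V B) - coshR (mdist A B) &
    (forall s t, 0 <= s <= mdist V A -> 0 <= t <= mdist V B ->
      mdist (gA s) (gB t) <= acoshR (coshR s * coshR t - k * sinhR s * sinhR t))].
Proof.
move=> hA hB l1p l2p.
set l1 := mdist V A in l1p hA *; set l2 := mdist V B in l2p hB *.
set l3 := mdist A B.
have t1 : l3 <= l1 + l2.
  by have := metric_triangle A V B; rewrite (metric_sym A V).
have t2 : l1 <= l2 + l3.
  by have := metric_triangle V B A; rewrite (metric_sym B A).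
have t3 : l2 <= l1 + l3.
  by have := metric_triangle V A B; rewrite -/l1 -/l3 -/l2.
have l30 : 0 <= l3 by apply: mdist_ge0.
have s1 := sh_gt0 _ l1p; have s2 := sh_gt0 _ l2p.
have s12 : 0 < sinhR l1 * sinhR l2 by apply: mulr_gt0.
set k := (coshR l1 * coshR l2 - coshR l3) / (sinhR l1 * sinhR l2).
have kE : k * sinhR l1 * sinhR l2 = coshR l1 * coshR l2 - coshR l3.
  by rewrite /k -mulrA divfK // gt_eqF.
have hk1 : k <= 1.
  rewrite /k ler_pdivrMr // mul1r.
  have : coshR (l1 - l2) <= coshR l3 by apply: ch_le; rewrite (ger0_norm l30); apply/ler_normlP; split; lra.
  rewrite ch_sub; lra.
have hk2 : -1 <= k.
  rewrite /k ler_pdivlMr // mulN1r.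
  have : coshR l3 <= coshR (l1 + l2) by apply: ch_le; rewrite !ger0_norm //; lra.
  rewrite ch_add; lra.
set c := Num.sqrt (1 - k ^+ 2).
have kc : k ^+ 2 + c ^+ 2 = 1.
  rewrite /c sqr_sqrtr; first by ring.
  by rewrite subr_ge0 expr2; nra.
exists k; split=> // s t /andP[hs1 hs2] /andP[ht1 ht2].
have [grp hrp] := Hgeo B A.
have h10 : (1:R) ^+ 2 + 0 ^+ 2 = 1 by rewrite expr1n expr0n addr0.
have hSP : mdot (ray k c l2) (ray 1 0 l1) = coshR l3.
  rewrite mdot_ray mulr1 mulr0 addr0; lra.
have H := Hcat A V B (fun s => gA (l1 - s)) gB grp (ray 1 0 l1) (ray 1 0 0) (ray k c l2)
  (fun s => ray 1 0 (l1 - s)) (ray k c) (seg (ray k c l2) (ray 1 0 l1) l3)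
  (geod_rev _ _ _ _ hA) hB hrp (in_H2_ray _ _ l1 h10) (in_H2_ray _ _ 0 h10) (in_H2_ray _ _ l2 kc).
have ePQ : hdist (ray 1 0 l1) (ray 1 0 0) = mdist A V.
  by rewrite hdist_ray // subr0 ger0_norm ?(ltW l1p) // metric_sym.
have eQS : hdist (ray 1 0 0) (ray k c l2) = mdist V B.
  by rewrite -(ray0 k c) hdist_ray // sub0r normrN ger0_norm // ltW.
have eSP : hdist (ray k c l2) (ray 1 0 l1) = mdist B A.
  by rewrite hdistE hSP acosh_ch ger0_norm // metric_sym.
have gPQ := ray_geod_rev 1 0 l1 h10 (ltW l1p).
have gQS : H2_geodesic (ray 1 0 0) (ray k c l2) (ray k c).
  by rewrite -(ray0 k c); apply: ray_geod => //; apply: ltW.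
have gSP := seg_geod _ _ _ (in_H2_ray _ _ l2 kc) (in_H2_ray _ _ l1 h10) l30 hSP.
have {H}H := H ePQ eQS eSP gPQ gQS gSP.
simpl in H.
have := H ord0 (@Ordinal 3 1 isT) (l1 - s) t.
simpl.
have e : l1 - (l1 - s) = s by ring.
rewrite e (metric_sym A V) -/l1 -/l2 => H'.
have := H' ltac:(apply/andP; split; lra) ltac:(apply/andP; split; lra).
by rewrite hdistE mdot_ray mul1r mul0r addr0.
Qed.


Lemma sqrt_le_bound (A B : R) : 0 <= B -> A <= B ^+ 2 -> Num.sqrt A <= B.
Proof.
move=> hB hA.
have -> : B = Num.sqrt (B ^+ 2) by rewrite sqrtr_sqr ger0_norm.
exact: ler_wsqrtr.
Qed.

Lemma phi_bound (eps z : R) :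
  expR z * (coshR eps - coshR z) <= sinhR eps ^+ 2 / 2.
Proof.
have h := ch_sh eps.
have ez : expR z * coshR z = (expR z ^+ 2 + 1) / 2.
  rewrite /coshR expRN; have := expR_neq0 z => hz; by field.
have : sinhR eps ^+ 2 / 2 - expR z * (coshR eps - coshR z) = (expR z - coshR eps) ^+ 2 / 2.
  rewrite mulrBr ez; have -> : sinhR eps ^+ 2 = coshR eps ^+ 2 - 1 by lra.
  by field.
have := sqr_ge0 (expR z - coshR eps); lra.
Qed.

Lemma num_bound (eps L l1 l2 l3 k s : R) :
  0 < eps -> 0 <= L -> 0 < l1 -> 0 < l2 -> 0 <= l3 -> l3 <= eps -> k <= 1 ->
  k * sinhR l1 * sinhR l2 = coshR l1 * coshR l2 - coshR l3 ->
  0 <= s -> s <= l2 -> s = l1 - L / 2 ->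
  expR (- (L / 2)) * sinhR eps <= eps / (2 * (1 + expR (eps / 2))) ->
  acoshR (coshR s * coshR s - k * sinhR s * sinhR s) <= eps / 4.
Proof.
move=> he hL h1 h2 h30 h3e hk kE hs0 hs2 hsE hq.
set C := coshR s * coshR s - k * sinhR s * sinhR s.
set x := C - 1.
have hxE : x = (1 - k) * sinhR s ^+ 2.
  by rewrite /x /C; have := ch_sh s; rewrite !expr2 => hh; lra.
have sh1 := sh_gt0 _ h1; have sh2 := sh_gt0 _ h2.
have shs := sh_ge0 _ hs0.
have P0 : 0 < sinhR l1 * sinhR l2 by apply: mulr_gt0.
set d := coshR l3 - coshR (l1 - l2).
have dE : (1 - k) * (sinhR l1 * sinhR l2) = d.
  by rewrite /d ch_sub; lra.
have d0 : 0 <= d by rewrite -dE mulr_ge0 // ?subr_ge0 // ltW.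
have x0 : 0 <= x by rewrite hxE mulr_ge0 ?subr_ge0 ?sqr_ge0.
have xP : x * (sinhR l1 * sinhR l2) = sinhR s ^+ 2 * d.
  by rewrite -dE hxE; ring.
have r1 := sh_ratio s l1 ltac:(lra).
have r2 := sh_ratio s l2 hs2.
have sq : sinhR s ^+ 2 <= expR (s - l1) * expR (s - l2) * (sinhR l1 * sinhR l2).
  rewrite expr2; have e1 := expR_ge0 (s - l1); have e2 := expR_ge0 (s - l2).
  have := ler_pM shs shs r1 r2; rewrite (_ : expR (s - l1) * sinhR l1 * (expR (s - l2) * sinhR l2) =
     expR (s - l1) * expR (s - l2) * (sinhR l1 * sinhR l2)) //; ring.
have dle : d <= coshR eps - coshR (l1 - l2).
  rewrite /d lerD2r; apply: ch_le; rewrite !ger0_norm //; lra.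
have eE : expR (s - l1) * expR (s - l2) = expR (l1 - l2) * expR (- (L / 2)) ^+ 2.
  by rewrite expr2 -!expRD; congr expR; rewrite hsE; ring.
have xb : x <= expR (- (L / 2)) ^+ 2 * (sinhR eps ^+ 2 / 2).
  have : x * (sinhR l1 * sinhR l2) <=
         (expR (- (L / 2)) ^+ 2 * (sinhR eps ^+ 2 / 2)) * (sinhR l1 * sinhR l2).
    rewrite xP.
    apply: (le_trans (ler_wpM2r d0 sq)).
    rewrite eE.
    have ph := phi_bound eps (l1 - l2).
    have ee := expR_ge0 (l1 - l2).
    have hA : expR (l1 - l2) * d <= sinhR eps ^+ 2 / 2.
      by apply: le_trans ph; rewrite ler_wpM2l.
    set eL := expR (- (L / 2)) ^+ 2.
    have eL0 : 0 <= eL by rewrite /eL sqr_ge0.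
    have -> : expR (l1 - l2) * eL * (sinhR l1 * sinhR l2) * d =
      (eL * (sinhR l1 * sinhR l2)) * (expR (l1 - l2) * d) by ring.
    have -> : eL * (sinhR eps ^+ 2 / 2) * (sinhR l1 * sinhR l2) =
      (eL * (sinhR l1 * sinhR l2)) * (sinhR eps ^+ 2 / 2) by ring.
    by rewrite ler_wpM2l // mulr_ge0 // ltW.
  by rewrite ler_pM2r.
set q := expR (- (L / 2)) * sinhR eps.
have q0 : 0 <= q by rewrite mulr_ge0 ?expR_ge0 ?sh_ge0 // ltW.
have xq : x <= q ^+ 2 / 2.
  have -> : q ^+ 2 / 2 = expR (- (L / 2)) ^+ 2 * (sinhR eps ^+ 2 / 2) by rewrite /q exprMn; field.
  exact: xb.
set u := expR (eps / 2).
have hu : 1 + eps / 2 <= u by apply: expR_ge1Dx.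
set Q := eps / (2 * (1 + u)).
have QE : Q * (2 * (1 + u)) = eps by rewrite /Q divfK // gt_eqF //; lra.
have Q0 : 0 <= Q by rewrite /Q divr_ge0 //; lra.
have Qle : Q <= eps / 4.
  rewrite /Q ler_pdivrMr; last lra.
  rewrite mulrC mulrA; have : 2 <= 1 + u by lra.
  move=> hh; nra.
have qQ : q + q ^+ 2 <= eps / 4.
  have hqQ : q <= Q by exact: hq.
  have qq : q * q <= Q * Q by apply: ler_pM.
  have h1' : q + q ^+ 2 <= Q + Q ^+ 2 by rewrite !expr2; lra.
  have h2' : Q + Q ^+ 2 <= eps / 4.
    have hQu : Q <= (u - 1) / 2 by lra.
    have f1 : Q * (1 + Q) <= Q * ((1 + u) / 2) by rewrite ler_wpM2l //; lra.
    have f2 : Q * ((1 + u) / 2) = eps / 4.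
      by rewrite -QE; field.
    rewrite expr2; rewrite mulrDr mulr1 in f1; lra.
  lra.
have Cx : C = 1 + x by rewrite /x; ring.
apply: acosh_le; first by rewrite Cx; lra.
rewrite Cx.
have hs : Num.sqrt ((1 + x) ^+ 2 - 1) <= q + q ^+ 2 - x.
  apply: sqrt_le_bound; first by lra.
  rewrite !expr2; rewrite !expr2 in xq; nra.
apply: (le_trans _ (expR_ge1Dx _)); lra.
Qed.


Lemma poly_ineq (v : R) : 1 < v -> 4 * (v - 1) * v ^+ 8 < (1 + v ^+ 2) * (v ^+ 8 - 1).
Proof.
move=> hv; rewrite -subr_gt0.
have -> : (1 + v ^+ 2) * (v ^+ 8 - 1) - 4 * (v - 1) * v ^+ 8 =
  (v - 1) * (v ^+ 6 * (v ^+ 3 - 3 * v ^+ 2 + 2 * v + 2) +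
   (2 * v ^+ 5 + 2 * v ^+ 4 + 2 * v ^+ 3 + 2 * v ^+ 2 + v + 1)) by ring.
have v0 : 0 <= v by lra.
apply: mulr_gt0; first lra.
have A0 : 0 <= v ^+ 6 * (v ^+ 3 - 3 * v ^+ 2 + 2 * v + 2).
  apply: mulr_ge0; first by rewrite exprn_ge0.
  have -> : v ^+ 3 - 3 * v ^+ 2 + 2 * v + 2 =
    (v - 1) * (v - 2) ^+ 2 + 2 * ((v - 1) ^+ 2 - (v - 1) + 1) by ring.
  apply: addr_ge0; first by apply: mulr_ge0; [lra | exact: sqr_ge0].
  apply: mulr_ge0 => //.
  have -> : (v - 1) ^+ 2 - (v - 1) + 1 = ((2 * v - 3) ^+ 2 + 3) / 4 by field.
  by rewrite divr_ge0 // addr_ge0 // sqr_ge0.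
have := exprn_ge0 5 v0; have := exprn_ge0 4 v0; have := exprn_ge0 3 v0;
  have := exprn_ge0 2 v0; lra.
Qed.

Lemma c0_facts (eps L : R) : 0 < eps -> c0 eps <= L ->
  expR (- (L / 2)) * sinhR eps <= eps / (2 * (1 + expR (eps / 2))) /\ 2 * eps < L.
Proof.
move=> he; rewrite /c0.
set u := expR (eps / 2).
have u0 : 0 < u by apply: expR_gt0.
have she := sh_gt0 _ he.
set K := 2 * (1 + u) * sinhR eps / eps.
have K0 : 0 < K by rewrite /K divr_gt0 // mulr_gt0 // mulr_gt0 //; lra.
move=> hL.
have hK : K <= expR (L / 2).
  rewrite -(lnK K0) ler_expR; lra.
have eL : expR (- (L / 2)) = (expR (L / 2))^-1 by rewrite expRN.
split.
  rewrite eL mulrC -/(_ / _) ler_pdivrMr ?expR_gt0 //.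
  apply: le_trans (_ : eps / (2 * (1 + u)) * K <= _); last first.
    by rewrite ler_wpM2l // divr_ge0 //; lra.
  rewrite /K.
  have -> : eps / (2 * (1 + u)) * (2 * (1 + u) * sinhR eps / eps) = sinhR eps.
    by field; apply/andP; split; apply/eqP; lra.
  by [].
suff hK2 : expR eps < K.
  have := lt_le_trans hK2 hK; rewrite ltr_expR; lra.
set v := expR (eps / 4).
have hv : 1 + eps / 4 <= v by apply: expR_ge1Dx.
have v0 : 0 < v by apply: expR_gt0.
have ue : u = v ^+ 2 by rewrite /u /v expr2 -expRD; congr expR; field.
have ee : expR eps = v ^+ 4.
  have -> : v ^+ 4 = (v ^+ 2) * (v ^+ 2) by rewrite -exprD.
  by rewrite -ue /u -expRD; congr expR; field.
have se : sinhR eps = (v ^+ 4 - (v ^+ 4)^-1) / 2 by rewrite /sinhR expRN ee.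
rewrite /K ee se ue ltr_pdivlMr //.
have v1 : 1 < v.
  have : 0 < eps / 4 by rewrite divr_gt0.
  lra.
have hp := poly_ineq v v1.
have v4 : 0 < v ^+ 4 by apply: exprn_gt0.
have : v ^+ 4 * eps <= v ^+ 4 * (4 * (v - 1)) by rewrite ler_wpM2l //; lra.
have -> : 2 * (1 + v ^+ 2) * ((v ^+ 4 - (v ^+ 4)^-1) / 2) =
  (1 + v ^+ 2) * (v ^+ 8 - 1) / v ^+ 4.
  by field; rewrite gt_eqF.
rewrite ltr_pdivlMr //.
move=> h.
apply: (le_lt_trans (ler_wpM2r (ltW v4) h)).
have -> : v ^+ 4 * (4 * (v - 1)) * v ^+ 4 = 4 * (v - 1) * v ^+ 8.
  by rewrite (_ : 8 = 4 + 4)%N // exprD; ring.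
exact: hp.
Qed.


Lemma main (X : metricType R)
  (HX_geod : geodesic_space X) (HX_cat : CAT_m1 X)
  (eps : R) (Heps : 0 < eps) (a b a' b' : X)
  (Haa' : mdist a a' <= eps) (Hbb' : mdist b b' <= eps)
  (Hab : c0 eps <= mdist a b)
  (g : R -> X) (Hg : is_geodesic (@mdist R X) a b g)
  (g' : R -> X) (Hg' : is_geodesic (@mdist R X) a' b' g') :
  dist_to_seg (g (mdist a b / 2)) g' (mdist a' b') <= eps / 2.
Proof.
have [hq hLe] := c0_facts eps (mdist a b) Heps Hab.
set L := mdist a b in hq hLe Hg *.
have hL0 : 0 < L by lra.
have [h hh] := HX_geod b a'.
set L1 := mdist b a' in hh.
have Lba : mdist b a = L by rewrite metric_sym.
have t1 : L <= mdist a a' + L1 by have := metric_triangle a a' b; rewrite (metric_sym a' b).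
have t2 : L1 <= L + mdist a a' by have := metric_triangle b a a'; rewrite Lba.
have L1p : 0 < L1 by lra.
have aa0 : 0 <= mdist a a' by apply: mdist_ge0.
have bb0 : 0 <= mdist b b' by apply: mdist_ge0.
have Lbap : 0 < mdist b a by rewrite Lba.
have [k1 [hk1 kE1 H1]] := cat_vertex _ HX_geod HX_cat _ _ _ _ _ (geod_rev _ _ _ _ Hg) hh
  Lbap L1p.
have c1 : 0 <= L / 2 <= mdist b a by rewrite Lba; apply/andP; split; lra.
have c2 : 0 <= L / 2 <= L1 by apply/andP; split; lra.
have D1 := H1 (L / 2) (L / 2) c1 c2.
rewrite -/L (_ : L - L / 2 = L / 2) in D1; last by field.
have c3 : 0 <= L / 2 by lra.
have c4 : L / 2 <= L1 by lra.
have c5 : L / 2 = mdist b a - L / 2 by rewrite Lba; field.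
have N1 := num_bound _ _ _ _ _ _ _ Heps (ltW hL0) Lbap L1p aa0 Haa' hk1 kE1 c3 c4 c5 hq.
set L2 := mdist a' b'.
have L1s : mdist a' b = L1 by rewrite metric_sym.
have t3 : L1 <= L2 + mdist b b'.
  by rewrite -L1s; have := metric_triangle a' b' b; rewrite (metric_sym b' b).
have L2p : 0 < L2 by lra.
have L1sp : 0 < mdist a' b by rewrite L1s.
have [k2 [hk2 kE2 H2]] := cat_vertex _ HX_geod HX_cat _ _ _ _ _ (geod_rev _ _ _ _ hh) Hg'
  L1sp L2p.
have d1 : 0 <= L1 - L / 2 <= mdist a' b by rewrite L1s; apply/andP; split; lra.
have d2 : 0 <= L1 - L / 2 <= L2 by apply/andP; split; lra.
have D2 := H2 (L1 - L / 2) (L1 - L / 2) d1 d2.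
rewrite -/L1 (_ : L1 - (L1 - L / 2) = L / 2) in D2; last by field.
have d3 : 0 <= L1 - L / 2 by lra.
have d4 : L1 - L / 2 <= L2 by lra.
have d5 : L1 - L / 2 = mdist a' b - L / 2 by rewrite L1s.
have N2 := num_bound _ _ _ _ _ _ _ Heps (ltW hL0) L1sp L2p bb0 Hbb' hk2 kE2 d3 d4 d5 hq.
rewrite /dist_to_seg.
set E := [set _ | _ in _].
have hlb : has_lbound E.
  by exists 0 => y [t _ <-]; apply: mdist_ge0.
have hE : E (mdist (g (L / 2)) (g' (L1 - L / 2))).
  by exists (L1 - L / 2) => //=; apply/andP; split; lra.
apply: le_trans (ge_inf hlb hE) _.
apply: le_trans (metric_triangle _ (h (L / 2)) _) _.
lra.
Qed.

End Hyp.

Theorem lemma2p2 (R : realType) (X : metricType R)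
  (HX_proper : proper_space X) (HX_geod : geodesic_space X) (HX_cat : CAT_m1 X)
  (eps : R) (Heps : 0 < eps) (a b a' b' : X)
  (Haa' : mdist a a' <= eps) (Hbb' : mdist b b' <= eps)
  (Hab : c0 eps <= mdist a b)
  (g : R -> X) (Hg : is_geodesic (@mdist R X) a b g)
  (g' : R -> X) (Hg' : is_geodesic (@mdist R X) a' b' g') :
  dist_to_seg (g (mdist a b / 2)) g' (mdist a' b') <= eps / 2.
Proof.
exact: (@main R X HX_geod HX_cat eps Heps a b a' b' Haa' Hbb' Hab g Hg g' Hg').
Qed.
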